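(* For all $0<x<\pi/2$, \[ \frac{\pi^2+\frac{\pi^2-12}{3}x^2+\frac{384-4\pi^4}{3\pi^4}x^4}{\pi^2-4x^2}<\frac{\tan x}{x}<\frac{\pi^2+\frac{72-8\pi^2}{\pi^2}x^2+\frac{16\pi^2-160}{\pi^4}x^4}{\pi^2-4x^2}. \] *)

(* Defs.v *)
From Stdlib Require Import Reals.

(* Main.v *)
Require Import Defs.
From Stdlib Require Import Reals Lra Lia Machin.
Open Scope R_scope.
Lemma pos_of_mul (K d : R) : 0 < K -> 0 < K*d -> 0 < d.
Proof. intros. destruct (Rle_or_lt d 0); [|assumption]. nra. Qed.
Lemma vnn (y a b : R) (i l : nat) : 0 < y -> b*y <= a -> 0 <= y^i * (a-b*y)^l.
Proof. intros; apply Rmult_le_pos; apply pow_le; lra. Qed.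
Lemma mm1 (c p q w : R) (j : nat) : 0 <= c -> q <= p -> 0 <= q -> 0 <= w -> 0 <= c*((p^j-q^j)*w).
Proof. intros. apply Rmult_le_pos; [lra|]. apply Rmult_le_pos; [|lra].
  assert (q^j <= p^j) by (apply pow_incr; lra). lra. Qed.
Lemma mm2 (c p q w : R) (j : nat) : 0 <= c -> p <= q -> 0 <= p -> 0 <= w -> 0 <= c*((q^j-p^j)*w).
Proof. intros. apply Rmult_le_pos; [lra|]. apply Rmult_le_pos; [|lra].
  assert (p^j <= q^j) by (apply pow_incr; lra). lra. Qed.
Definition QL (p x : R) := 3*p^6 + (p^6-12*p^4)*x^2 + (384-4*p^4)*x^4.
Definition QU (p x : R) := p^6 + (72*p^2-8*p^4)*x^2 + (16*p^2-160)*x^4.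
Lemma QL_pos p x : 3 < p < 4 -> 0 < x -> x < p/2 -> 0 < QL p x.
Proof. intros [hp1 hp2] hx0 hx1. unfold QL.
  assert (hx2 : x^2 < p^2/4) by nra.
  assert (0 < p^2) by nra.
  assert (hx4 : x^4 < p^4/16) by nra.
  nra.
Qed.
Lemma QU_pos p x : 3 < p < 315/100 -> 0 < x -> x < p/2 -> 0 < QU p x.
Proof. intros [hp1 hp2] hx0 hx1. unfold QU.
  assert (hx2 : x^2 < p^2/4) by nra.
  assert (0 < p^2) by nra.
  assert (h3 : 0 <= (160-16*p^2)*(x^2*(p^2/4-x^2))).
  { apply Rmult_le_pos; [nra|]. apply Rmult_le_pos; nra. }
  assert (h4 : 0 < p^4) by (apply pow_lt; lra).
  assert (h5 : 0 < x^2) by (apply pow_lt; lra).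
  assert (h6 : 0 <= p^2/4 - x^2) by lra.
  assert (h7 : 0 <= p^4*(p^2/4-x^2)) by (apply Rmult_le_pos; lra).
  assert (h8 : 0 <= p^4*x^2) by (apply Rmult_le_pos; lra).
  nra.
Qed.
Lemma pi_bounds : 3141592/1000000 < PI < 3141593/1000000.
Proof.
  destruct (PI_2_3_7_ineq 4) as [H1 H2].
  unfold tg_alt, PI_2_3_7_tg, Ratan_seq in H1, H2.
  simpl sum_f_R0 in H1, H2. simpl INR in H1, H2.
  split; lra.
Qed.
Ltac approx_tac := cbn [sum_f_R0 Nat.mul Nat.add];
  rewrite !fact_simpl, !mult_INR; cbn [INR Factorial.fact]; field.
Lemma sin_bnd (a : R) : 0 <= a -> a <= PI ->
  a - a^3/6 + a^5/120 - a^7/5040 <= sin a <= a - a^3/6 + a^5/120 - a^7/5040 + a^9/362880.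
Proof.
  intros h0 h1. destruct (sin_bound a 1 h0 h1) as [A B].
  replace (sin_approx a (2*1+1)) with (a - a^3/6 + a^5/120 - a^7/5040) in A
    by (unfold sin_approx, sin_term; approx_tac).
  replace (sin_approx a (2*(1+1))) with (a - a^3/6 + a^5/120 - a^7/5040 + a^9/362880) in B
    by (unfold sin_approx, sin_term; approx_tac).
  split; assumption.
Qed.
Lemma cos_bnd (a : R) : - PI / 2 <= a -> a <= PI / 2 ->
  1 - a^2/2 + a^4/24 - a^6/720 <= cos a <= 1 - a^2/2 + a^4/24 - a^6/720 + a^8/40320.
Proof.
  intros h0 h1. destruct (cos_bound a 1 h0 h1) as [A B].
  replace (cos_approx a (2*1+1)) with (1 - a^2/2 + a^4/24 - a^6/720) in A
    by (unfold cos_approx, cos_term; approx_tac).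
  replace (cos_approx a (2*(1+1))) with (1 - a^2/2 + a^4/24 - a^6/720 + a^8/40320) in B
    by (unfold cos_approx, cos_term; approx_tac).
  split; assumption.
Qed.
Lemma poly_LA (y p : R) : 0 < y -> y <= (157/200) -> (3141592/1000000) <= p -> p <= (3141593/1000000) -> 0 < 3*p^4*(p^2-4*y^2)*(y - y^3/6 + y^5/120 - y^7/5040) - y*(1 - y^2/2 + y^4/24 - y^6/720 + y^8/40320)*(3*p^6 + (p^6-12*p^4)*y^2 + (384-4*p^4)*y^4).
Proof.
  intros h0 h1 h2 h3.
  assert (g1 : 3141592 <= 1000000*p) by lra. assert (g2 : 1000000*p <= 3141593) by lra.
  assert (g3 : 0 < y) by lra. assert (g4 : 200*y <= 157) by lra. clear h1 h2 h3.
  apply (pos_of_mul 14883934245198939688320000000000000000000000000000000000000); [lra|].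
  assert (E : 14883934245198939688320000000000000000000000000000000000000 * (3*p^4*(p^2-4*y^2)*(y - y^3/6 + y^5/120 - y^7/5040) - y*(1 - y^2/2 + y^4/24 - y^6/720 + y^8/40320)*(3*p^6 + (p^6-12*p^4)*y^2 + (384-4*p^4)*y^4)) = (1590156288000000000000*((3141593^4-(1000000*p)^4)*(y^7*(157-200*y)^6)) + 1908187545600000000000000*((3141593^4-(1000000*p)^4)*(y^8*(157-200*y)^5)) + 950360843053056000000000000*((3141593^4-(1000000*p)^4)*(y^9*(157-200*y)^4)) + 251438662282444800000000000000*((3141593^4-(1000000*p)^4)*(y^10*(157-200*y)^3)) + 37271022699961707188000000000000*((3141593^4-(1000000*p)^4)*(y^11*(157-200*y)^2)) + 2934916291949098875200000000000000*((3141593^4-(1000000*p)^4)*(y^12*(157-200*y)^1)) + 95922835345241993974396000000000000*((3141593^4-(1000000*p)^4)*(y^13*(157-200*y)^0)) + 16128*(((1000000*p)^6-3141592^6)*(y^5*(157-200*y)^8)) + 25804800*(((1000000*p)^6-3141592^6)*(y^6*(157-200*y)^7)) + 18025499136*(((1000000*p)^6-3141592^6)*(y^7*(157-200*y)^6)) + 7179910963200*(((1000000*p)^6-3141592^6)*(y^8*(157-200*y)^5)) + 1783651682979653*(((1000000*p)^6-3141592^6)*(y^9*(157-200*y)^4)) + 282981782863722400*(((1000000*p)^6-3141592^6)*(y^10*(157-200*y)^3)) + 28000428619044888551*(((1000000*p)^6-3141592^6)*(y^11*(157-200*y)^2)) + 1579838794840163420400*(((1000000*p)^6-3141592^6)*(y^12*(157-200*y)^1))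 + 38915507868571542040000*(((1000000*p)^6-3141592^6)*(y^13*(157-200*y)^0))) + (22385559294984941178844662106953489580032*(y^5*(157-200*y)^8) + 35816894871975905886151459371125583328051200*(y^6*(157-200*y)^7) + 24595853962074311387683295679699515894906486784*(y^7*(157-200*y)^6) + 9457563626182666368975137567809092410179112140800*(y^8*(157-200*y)^5) + 2224221022320274858171911776077575444970243634757632*(y^9*(157-200*y)^4) + 327091111050522577277216322663919801992894176926105600*(y^10*(157-200*y)^3) + 29319208282546482667418549547481724305293243058249580544*(y^11*(157-200*y)^2) + 1461665668087278307471304697842834960833689003291384217600*(y^12*(157-200*y)^1) + 30977065079339510484246699294700267726149183408927221760000*(y^13*(157-200*y)^0))) by field.
  rewrite E; clear E. apply Rplus_le_lt_0_compat.
  apply Rplus_le_le_0_compat; [|(apply mm1; [lra|lra|lra|apply vnn; lra])].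
  apply Rplus_le_le_0_compat; [|(apply mm1; [lra|lra|lra|apply vnn; lra])].
  apply Rplus_le_le_0_compat; [|(apply mm1; [lra|lra|lra|apply vnn; lra])].
  apply Rplus_le_le_0_compat; [|(apply mm1; [lra|lra|lra|apply vnn; lra])].
  apply Rplus_le_le_0_compat; [|(apply mm1; [lra|lra|lra|apply vnn; lra])].
  apply Rplus_le_le_0_compat; [|(apply mm1; [lra|lra|lra|apply vnn; lra])].
  apply Rplus_le_le_0_compat; [|(apply mm1; [lra|lra|lra|apply vnn; lra])].
  apply Rplus_le_le_0_compat; [|(apply mm1; [lra|lra|lra|apply vnn; lra])].
  apply Rplus_le_le_0_compat; [|(apply mm1; [lra|lra|lra|apply vnn; lra])].
  apply Rplus_le_le_0_compat; [|(apply mm2; [lra|lra|lra|apply vnn; lra])].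
  apply Rplus_le_le_0_compat; [|(apply mm2; [lra|lra|lra|apply vnn; lra])].
  apply Rplus_le_le_0_compat; [|(apply mm2; [lra|lra|lra|apply vnn; lra])].
  apply Rplus_le_le_0_compat; [|(apply mm2; [lra|lra|lra|apply vnn; lra])].
  apply Rplus_le_le_0_compat; [|(apply mm2; [lra|lra|lra|apply vnn; lra])].
  apply Rplus_le_le_0_compat; [|(apply mm2; [lra|lra|lra|apply vnn; lra])].
  (apply mm2; [lra|lra|lra|apply vnn; lra]).
  apply Rplus_le_lt_0_compat; [|apply Rmult_lt_0_compat; [lra|apply Rmult_lt_0_compat; [apply pow_lt; lra|simpl; lra]]].
  apply Rplus_le_le_0_compat; [|(apply Rmult_le_pos; [lra|apply vnn; lra])].
  apply Rplus_le_le_0_compat; [|(apply Rmult_le_pos; [lra|apply vnn; lra])].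
  apply Rplus_le_le_0_compat; [|(apply Rmult_le_pos; [lra|apply vnn; lra])].
  apply Rplus_le_le_0_compat; [|(apply Rmult_le_pos; [lra|apply vnn; lra])].
  apply Rplus_le_le_0_compat; [|(apply Rmult_le_pos; [lra|apply vnn; lra])].
  apply Rplus_le_le_0_compat; [|(apply Rmult_le_pos; [lra|apply vnn; lra])].
  apply Rplus_le_le_0_compat; [|(apply Rmult_le_pos; [lra|apply vnn; lra])].
  (apply Rmult_le_pos; [lra|apply vnn; lra]).
Qed.

Lemma poly_UA (y p : R) : 0 < y -> y <= (157/200) -> (3141592/1000000) <= p -> p <= (3141593/1000000) -> 0 < y*(1 - y^2/2 + y^4/24 - y^6/720)*(p^6 + (72*p^2-8*p^4)*y^2 + (16*p^2-160)*y^4) - p^4*(p^2-4*y^2)*(y - y^3/6 + y^5/120 - y^7/5040 + y^9/362880).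
Proof.
  intros h0 h1 h2 h3.
  assert (g1 : 3141592 <= 1000000*p) by lra. assert (g2 : 1000000*p <= 3141593) by lra.
  assert (g3 : 0 < y) by lra. assert (g4 : 200*y <= 157) by lra. clear h1 h2 h3.
  apply (pos_of_mul 133955408206790457194880000000000000000000000000000000000000); [lra|].
  assert (E : 133955408206790457194880000000000000000000000000000000000000 * (y*(1 - y^2/2 + y^4/24 - y^6/720)*(p^6 + (72*p^2-8*p^4)*y^2 + (16*p^2-160)*y^4) - p^4*(p^2-4*y^2)*(y - y^3/6 + y^5/120 - y^7/5040 + y^9/362880)) = (26127360000000000000000000000000*(((1000000*p)^2-3141592^2)*(y^3*(157-200*y)^8)) + 41803776000000000000000000000000000*(((1000000*p)^2-3141592^2)*(y^4*(157-200*y)^7)) + 29083750617600000000000000000000000000*(((1000000*p)^2-3141592^2)*(y^5*(157-200*y)^6)) + 11490386181120000000000000000000000000000*(((1000000*p)^2-3141592^2)*(y^6*(157-200*y)^5)) + 2817826389744105600000000000000000000000000*(((1000000*p)^2-3141592^2)*(y^7*(157-200*y)^4)) + 438697573363284480000000000000000000000000000*(((1000000*p)^2-3141592^2)*(y^8*(157-200*y)^3)) + 42265315306188188520768000000000000000000000000*(((1000000*p)^2-3141592^2)*(y^9*(157-200*y)^2)) + 2297923543524517008307200000000000000000000000000*(((1000000*p)^2-3141592^2)*(y^10*(157-200*y)^1)) + 53793312618233701042782336000000000000000000000000*(((1000000*p)^2-3141592^2)*(y^11*(157-200*y)^0)) + 1451520000000000000*((3141593^4-(1000000*p)^4)*(y^3*(157-200*y)^8))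 + 2322432000000000000000*((3141593^4-(1000000*p)^4)*(y^4*(157-200*y)^7)) + 1595886969600000000000000*((3141593^4-(1000000*p)^4)*(y^5*(157-200*y)^6)) + 614502443520000000000000000*((3141593^4-(1000000*p)^4)*(y^6*(157-200*y)^5)) + 144747124608953664000000000000*((3141593^4-(1000000*p)^4)*(y^7*(157-200*y)^4)) + 21293683815162931200000000000000*((3141593^4-(1000000*p)^4)*(y^8*(157-200*y)^3)) + 1901371723735942414944000000000000*((3141593^4-(1000000*p)^4)*(y^9*(157-200*y)^2)) + 93484164633342469977600000000000000*((3141593^4-(1000000*p)^4)*(y^10*(157-200*y)^1)) + 1911287919627606304214396000000000000*((3141593^4-(1000000*p)^4)*(y^11*(157-200*y)^0)) + 120960*((3141593^6-(1000000*p)^6)*(y^3*(157-200*y)^8)) + 193536000*((3141593^6-(1000000*p)^6)*(y^4*(157-200*y)^7)) + 135177045696*((3141593^6-(1000000*p)^6)*(y^5*(157-200*y)^6)) + 53832294835200*((3141593^6-(1000000*p)^6)*(y^6*(157-200*y)^5)) + 13368889889222832*((3141593^6-(1000000*p)^6)*(y^7*(157-200*y)^4)) + 2120108488658265600*((3141593^6-(1000000*p)^6)*(y^8*(157-200*y)^3)) + 209667624869551511449*((3141593^6-(1000000*p)^6)*(y^9*(157-200*y)^2)) + 11822252818679356579600*((3141593^6-(1000000*p)^6)*(y^10*(157-200*y)^1)) + 290996278183404457960000*((3141593^6-(1000000*p)^6)*(y^11*(157-200*y)^0))) + (185579977906109677232001394802193987288960*(y^3*(157-200*y)^8) + 296927964649775483571202231683510379662336000*(y^4*(157-200*y)^7)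 + 202048402675950809338876127127722489804366642496*(y^5*(157-200*y)^6) + 76178423007266700406778102810501175154331810995200*(y^6*(157-200*y)^5) + 17367033821831989384827426388085126002846243021668432*(y^7*(157-200*y)^4) + 2447629466401099175381020347281964100370280018614745600*(y^8*(157-200*y)^3) + 208009622910581271364473238499938091390246534504754149399*(y^9*(157-200*y)^2) + 9718606148902432799620182779613370002137229892242011759600*(y^10*(157-200*y)^1) + 189240729360273102516023160493239857873616845630709975960000*(y^11*(157-200*y)^0))) by field.
  rewrite E; clear E. apply Rplus_le_lt_0_compat.
  apply Rplus_le_le_0_compat; [|(apply mm2; [lra|lra|lra|apply vnn; lra])].
  apply Rplus_le_le_0_compat; [|(apply mm2; [lra|lra|lra|apply vnn; lra])].
  apply Rplus_le_le_0_compat; [|(apply mm2; [lra|lra|lra|apply vnn; lra])].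
  apply Rplus_le_le_0_compat; [|(apply mm2; [lra|lra|lra|apply vnn; lra])].
  apply Rplus_le_le_0_compat; [|(apply mm2; [lra|lra|lra|apply vnn; lra])].
  apply Rplus_le_le_0_compat; [|(apply mm2; [lra|lra|lra|apply vnn; lra])].
  apply Rplus_le_le_0_compat; [|(apply mm2; [lra|lra|lra|apply vnn; lra])].
  apply Rplus_le_le_0_compat; [|(apply mm2; [lra|lra|lra|apply vnn; lra])].
  apply Rplus_le_le_0_compat; [|(apply mm2; [lra|lra|lra|apply vnn; lra])].
  apply Rplus_le_le_0_compat; [|(apply mm2; [lra|lra|lra|apply vnn; lra])].
  apply Rplus_le_le_0_compat; [|(apply mm2; [lra|lra|lra|apply vnn; lra])].
  apply Rplus_le_le_0_compat; [|(apply mm2; [lra|lra|lra|apply vnn; lra])].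
  apply Rplus_le_le_0_compat; [|(apply mm2; [lra|lra|lra|apply vnn; lra])].
  apply Rplus_le_le_0_compat; [|(apply mm2; [lra|lra|lra|apply vnn; lra])].
  apply Rplus_le_le_0_compat; [|(apply mm2; [lra|lra|lra|apply vnn; lra])].
  apply Rplus_le_le_0_compat; [|(apply mm2; [lra|lra|lra|apply vnn; lra])].
  apply Rplus_le_le_0_compat; [|(apply mm2; [lra|lra|lra|apply vnn; lra])].
  apply Rplus_le_le_0_compat; [|(apply mm2; [lra|lra|lra|apply vnn; lra])].
  apply Rplus_le_le_0_compat; [|(apply mm1; [lra|lra|lra|apply vnn; lra])].
  apply Rplus_le_le_0_compat; [|(apply mm1; [lra|lra|lra|apply vnn; lra])].
  apply Rplus_le_le_0_compat; [|(apply mm1; [lra|lra|lra|apply vnn; lra])].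
  apply Rplus_le_le_0_compat; [|(apply mm1; [lra|lra|lra|apply vnn; lra])].
  apply Rplus_le_le_0_compat; [|(apply mm1; [lra|lra|lra|apply vnn; lra])].
  apply Rplus_le_le_0_compat; [|(apply mm1; [lra|lra|lra|apply vnn; lra])].
  apply Rplus_le_le_0_compat; [|(apply mm1; [lra|lra|lra|apply vnn; lra])].
  apply Rplus_le_le_0_compat; [|(apply mm1; [lra|lra|lra|apply vnn; lra])].
  (apply mm1; [lra|lra|lra|apply vnn; lra]).
  apply Rplus_le_lt_0_compat; [|apply Rmult_lt_0_compat; [lra|apply Rmult_lt_0_compat; [apply pow_lt; lra|simpl; lra]]].
  apply Rplus_le_le_0_compat; [|(apply Rmult_le_pos; [lra|apply vnn; lra])].
  apply Rplus_le_le_0_compat; [|(apply Rmult_le_pos; [lra|apply vnn; lra])].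
  apply Rplus_le_le_0_compat; [|(apply Rmult_le_pos; [lra|apply vnn; lra])].
  apply Rplus_le_le_0_compat; [|(apply Rmult_le_pos; [lra|apply vnn; lra])].
  apply Rplus_le_le_0_compat; [|(apply Rmult_le_pos; [lra|apply vnn; lra])].
  apply Rplus_le_le_0_compat; [|(apply Rmult_le_pos; [lra|apply vnn; lra])].
  apply Rplus_le_le_0_compat; [|(apply Rmult_le_pos; [lra|apply vnn; lra])].
  (apply Rmult_le_pos; [lra|apply vnn; lra]).
Qed.

Lemma poly_LB (y p : R) : 0 < y -> y <= (3929/5000) -> (3141592/1000000) <= p -> p <= (3141593/1000000) -> 0 < 3*p^4*(4*y*(p-y))*(1 - y^2/2 + y^4/24 - y^6/720) - (p/2-y)*(y - y^3/6 + y^5/120 - y^7/5040 + y^9/362880)*(3*p^6 + (p^6-12*p^4)*(p/2-y)^2 + (384-4*p^4)*(p/2-y)^4).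
Proof.
  intros h0 h1 h2 h3.
  assert (g1 : 3141592 <= 1000000*p) by lra. assert (g2 : 1000000*p <= 3141593) by lra.
  assert (g3 : 0 < y) by lra. assert (g4 : 5000*y <= 3929) by lra. clear h1 h2 h3.
  apply (pos_of_mul 9821489897969225079596845351678231348031460668160000000000000000000000000000000000000000000000000); [lra|].
  assert (E : 9821489897969225079596845351678231348031460668160000000000000000000000000000000000000000000000000 * (3*p^4*(4*y*(p-y))*(1 - y^2/2 + y^4/24 - y^6/720) - (p/2-y)*(y - y^3/6 + y^5/120 - y^7/5040 + y^9/362880)*(3*p^6 + (p^6-12*p^4)*(p/2-y)^2 + (384-4*p^4)*(p/2-y)^4)) = (42258137122975334400000000000000000000000000000000000000000000*((3141593^1-(1000000*p)^1)*(y^5*(3929-5000*y)^9)) + 1901616170533890048000000000000000000000000000000000000000000000000*((3141593^1-(1000000*p)^1)*(y^6*(3929-5000*y)^8)) + 37923599978119302246813081600000000000000000000000000000000000000000000*((3141593^1-(1000000*p)^1)*(y^7*(3929-5000*y)^7)) + 439905119651693556238457856000000000000000000000000000000000000000000000000*((3141593^1-(1000000*p)^1)*(y^8*(3929-5000*y)^6)) + 3270832414745399073553563525000222720000000000000000000000000000000000000000000*((3141593^1-(1000000*p)^1)*(y^9*(3929-5000*y)^5)) + 16165574434835688899224624125005568000000000000000000000000000000000000000000000000*((3141593^1-(1000000*p)^1)*(y^10*(3929-5000*y)^4)) + 53106428643672179237631649718296834211005440000000000000000000000000000000000000000000*((3141593^1-(1000000*p)^1)*(y^11*(3929-5000*y)^3))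 + 111820470740721547834301613273895713165081600000000000000000000000000000000000000000000000*((3141593^1-(1000000*p)^1)*(y^12*(3929-5000*y)^2)) + 136932076206527481068770822636441650610927255159680000000000000000000000000000000000000000000*((3141593^1-(1000000*p)^1)*(y^13*(3929-5000*y)^1)) + 74299828467056728836133933619135700303276275798400000000000000000000000000000000000000000000000*((3141593^1-(1000000*p)^1)*(y^14*(3929-5000*y)^0)) + 10755443401113600000000000000000000000000000000000000*(((1000000*p)^2-3141592^2)*(y^4*(3929-5000*y)^10)) + 537772170055680000000000000000000000000000000000000000000*(((1000000*p)^2-3141592^2)*(y^5*(3929-5000*y)^9)) + 12072201789460104985190400000000000000000000000000000000000000*(((1000000*p)^2-3141592^2)*(y^6*(3929-5000*y)^8)) + 160224769544996199407616000000000000000000000000000000000000000000*(((1000000*p)^2-3141592^2)*(y^7*(3929-5000*y)^7)) + 1392302879359599606705485570119680000000000000000000000000000000000000*(((1000000*p)^2-3141592^2)*(y^8*(3929-5000*y)^6)) + 8276848182377878408498967103590400000000000000000000000000000000000000000*(((1000000*p)^2-3141592^2)*(y^9*(3929-5000*y)^5)) + 34088648719228970153666268858061764879360000000000000000000000000000000000000*(((1000000*p)^2-3141592^2)*(y^10*(3929-5000*y)^4)) + 96042915235195328079017526562835297587200000000000000000000000000000000000000000*(((1000000*p)^2-3141592^2)*(y^11*(3929-5000*y)^3)) + 177153074550810694894446141258824183363791105920000000000000000000000000000000000000*(((1000000*p)^2-3141592^2)*(y^12*(3929-5000*y)^2)) + 193168798549171324555863590430476954277911059200000000000000000000000000000000000000000*(((1000000*p)^2-3141592^2)*(y^13*(3929-5000*y)^1))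 + 94553103164999654919997370347589336094777648000000000000000000000000000000000000000000000*(((1000000*p)^2-3141592^2)*(y^14*(3929-5000*y)^0)) + 1368725299200000000000000000000000000000000*((3141593^3-(1000000*p)^3)*(y^3*(3929-5000*y)^11)) + 75279891456000000000000000000000000000000000000*((3141593^3-(1000000*p)^3)*(y^4*(3929-5000*y)^10)) + 1878475774973085388800000000000000000000000000000000*((3141593^3-(1000000*p)^3)*(y^5*(3929-5000*y)^9)) + 28071491281788842496000000000000000000000000000000000000*((3141593^3-(1000000*p)^3)*(y^6*(3929-5000*y)^8)) + 279132950761590812387829672960000000000000000000000000000000*((3141593^3-(1000000*p)^3)*(y^7*(3929-5000*y)^7)) + 1939216413740885268774038553600000000000000000000000000000000000*((3141593^3-(1000000*p)^3)*(y^8*(3929-5000*y)^6)) + 9604592724754182005110855736321425920000000000000000000000000000000*((3141593^3-(1000000*p)^3)*(y^9*(3929-5000*y)^5)) + 33912720645372891174261755008035648000000000000000000000000000000000000*((3141593^3-(1000000*p)^3)*(y^10*(3929-5000*y)^4)) + 83655847636394417827632193188215916429090240000000000000000000000000000000*((3141593^3-(1000000*p)^3)*(y^11*(3929-5000*y)^3)) + 137303915920491829858500165019673946436353600000000000000000000000000000000000*((3141593^3-(1000000*p)^3)*(y^12*(3929-5000*y)^2)) + 134944909125840707266392889093913732181768000000000000000000000000000000000000000*((3141593^3-(1000000*p)^3)*(y^13*(3929-5000*y)^1)) + 60163593258462493586152564486885553636280000000000000000000000000000000000000000000*((3141593^3-(1000000*p)^3)*(y^14*(3929-5000*y)^0))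 + 78382080000000000000000000000000*(((1000000*p)^4-3141592^4)*(y^2*(3929-5000*y)^12)) + 4702924800000000000000000000000000000*(((1000000*p)^4-3141592^4)*(y^3*(3929-5000*y)^11)) + 129039138741219840000000000000000000000000*(((1000000*p)^4-3141592^4)*(y^4*(3929-5000*y)^10)) + 2140942537060992000000000000000000000000000000*(((1000000*p)^4-3141592^4)*(y^5*(3929-5000*y)^9)) + 23921491658527388484236160000000000000000000000000*(((1000000*p)^4-3141592^4)*(y^6*(3929-5000*y)^8)) + 189615872104500339369446400000000000000000000000000000*(((1000000*p)^4-3141592^4)*(y^7*(3929-5000*y)^7)) + 1093228935882582485843873996719680000000000000000000000000*(((1000000*p)^4-3141592^4)*(y^8*(3929-5000*y)^6)) + 4618726596464019796009979901590400000000000000000000000000000*(((1000000*p)^4-3141592^4)*(y^9*(3929-5000*y)^5)) + 14189313063330286507231203759204012895536000000000000000000000000*(((1000000*p)^4-3141592^4)*(y^10*(3929-5000*y)^4)) + 30907235619789056786502091585680257910720000000000000000000000000000*(((1000000*p)^4-3141592^4)*(y^11*(3929-5000*y)^3)) + 45299628012648296575517767319600276625089942952000000000000000000000000*(((1000000*p)^4-3141592^4)*(y^12*(3929-5000*y)^2)) + 40102920990099891538972929895989870714899429520000000000000000000000000000*(((1000000*p)^4-3141592^4)*(y^13*(3929-5000*y)^1)) + 16212815682296909454689338909273877310072302326990072000000000000000000000000*(((1000000*p)^4-3141592^4)*(y^14*(3929-5000*y)^0)) + 39921154560000000000000000000*(((1000000*p)^5-3141592^5)*(y^3*(3929-5000*y)^11))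 + 2195663500800000000000000000000000*(((1000000*p)^5-3141592^5)*(y^4*(3929-5000*y)^10)) + 55217327326989601536000000000000000000*(((1000000*p)^5-3141592^5)*(y^5*(3929-5000*y)^9)) + 838032104114532069120000000000000000000000*(((1000000*p)^5-3141592^5)*(y^6*(3929-5000*y)^8)) + 8525863639303511699772333504000000000000000000*(((1000000*p)^5-3141592^5)*(y^7*(3929-5000*y)^7)) + 61020023844841277236031672640000000000000000000000*(((1000000*p)^5-3141592^5)*(y^8*(3929-5000*y)^6)) + 313287515251774575650902558583695176000000000000000000*(((1000000*p)^5-3141592^5)*(y^9*(3929-5000*y)^5)) + 1152946845423126695064645804592379400000000000000000000000*(((1000000*p)^5-3141592^5)*(y^10*(3929-5000*y)^4)) + 2978028542966719248023131700679368222455524000000000000000000*(((1000000*p)^5-3141592^5)*(y^11*(3929-5000*y)^3)) + 5137318536706459314040758250952583336832860000000000000000000000*(((1000000*p)^5-3141592^5)*(y^12*(3929-5000*y)^2)) + 5322389967801742855803313054597357150680125574580000000000000000000*(((1000000*p)^5-3141592^5)*(y^13*(3929-5000*y)^1)) + 2506785825257872656274609287903530139519627872900000000000000000000000*(((1000000*p)^5-3141592^5)*(y^14*(3929-5000*y)^0)) + 4354560000000000000*((3141593^6-(1000000*p)^6)*(y^2*(3929-5000*y)^12)) + 261273600000000000000000*((3141593^6-(1000000*p)^6)*(y^3*(3929-5000*y)^11)) + 7274652695009280000000000000*((3141593^6-(1000000*p)^6)*(y^4*(3929-5000*y)^10)) + 124231834750464000000000000000000*((3141593^6-(1000000*p)^6)*(y^5*(3929-5000*y)^9))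 + 1447773504052006201428288000000000000*((3141593^6-(1000000*p)^6)*(y^6*(3929-5000*y)^8)) + 12111935311801848057131520000000000000000*((3141593^6-(1000000*p)^6)*(y^7*(3929-5000*y)^7)) + 74457378796167945056122544248128000000000000*((3141593^6-(1000000*p)^6)*(y^8*(3929-5000*y)^6)) + 338271464273879531687644327443840000000000000000*((3141593^6-(1000000*p)^6)*(y^9*(3929-5000*y)^5)) + 1125191449722088449666763317593177850876000000000000*((3141593^6-(1000000*p)^6)*(y^10*(3929-5000*y)^4)) + 2667974085555407711928945111223557017520000000000000000*((3141593^6-(1000000*p)^6)*(y^11*(3929-5000*y)^3)) + 4274275614535827410725066432128797488835541618000000000000*((3141593^6-(1000000*p)^6)*(y^12*(3929-5000*y)^2)) + 4148982870999098468290621166510124012355416180000000000000000*((3141593^6-(1000000*p)^6)*(y^13*(3929-5000*y)^1)) + 1843479011974342075166279821539153233388540450000000000000000000*((3141593^6-(1000000*p)^6)*(y^14*(3929-5000*y)^0)) + 9980288640000000*(((1000000*p)^7-3141592^7)*(y^3*(3929-5000*y)^11)) + 548915875200000000000*(((1000000*p)^7-3141592^7)*(y^4*(3929-5000*y)^10)) + 13697219192512080960000000*(((1000000*p)^7-3141592^7)*(y^5*(3929-5000*y)^9)) + 204687957263043643200000000000*(((1000000*p)^7-3141592^7)*(y^6*(3929-5000*y)^8)) + 2035344432636599673661258032000000*(((1000000*p)^7-3141592^7)*(y^7*(3929-5000*y)^7)) + 14140119683527288418144031120000000000*(((1000000*p)^7-3141592^7)*(y^8*(3929-5000*y)^6))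 + 70033488617999243787266656410677064000000*(((1000000*p)^7-3141592^7)*(y^9*(3929-5000*y)^5)) + 247280254705843998145658630266926600000000000*(((1000000*p)^7-3141592^7)*(y^10*(3929-5000*y)^4)) + 609990555682042629993151408664074390628783000000*(((1000000*p)^7-3141592^7)*(y^11*(3929-5000*y)^3)) + 1001174386920252926051563703268455859431745000000000*(((1000000*p)^7-3141592^7)*(y^12*(3929-5000*y)^2)) + 983973295709255157150781482976454297158725000000000000*(((1000000*p)^7-3141592^7)*(y^13*(3929-5000*y)^1)) + 438692867509622349065695782716873828597875000000000000000*(((1000000*p)^7-3141592^7)*(y^14*(3929-5000*y)^0)) + 362880*((3141593^8-(1000000*p)^8)*(y^2*(3929-5000*y)^12)) + 21772800000*((3141593^8-(1000000*p)^8)*(y^3*(3929-5000*y)^11)) + 597818367760320*((3141593^8-(1000000*p)^8)*(y^4*(3929-5000*y)^10)) + 9932518388016000000*((3141593^8-(1000000*p)^8)*(y^5*(3929-5000*y)^9)) + 111216384356318143099344*((3141593^8-(1000000*p)^8)*(y^6*(3929-5000*y)^8)) + 884152341443125723973760000*((3141593^8-(1000000*p)^8)*(y^7*(3929-5000*y)^7)) + 5117044941847641561938218085688*((3141593^8-(1000000*p)^8)*(y^8*(3929-5000*y)^6)) + 21723001047007243467330542570640000*((3141593^8-(1000000*p)^8)*(y^9*(3929-5000*y)^5)) + 67134197331609737873011837254070733761*((3141593^8-(1000000*p)^8)*(y^10*(3929-5000*y)^4)) + 147297646268787625932346316641414675220000*((3141593^8-(1000000*p)^8)*(y^11*(3929-5000*y)^3))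 + 217788795051831428840802821485610064150000000*((3141593^8-(1000000*p)^8)*(y^12*(3929-5000*y)^2)) + 194835448716718108381616667185366880500000000000*((3141593^8-(1000000*p)^8)*(y^13*(3929-5000*y)^1)) + 79753639150205859190942039544208600625000000000000*((3141593^8-(1000000*p)^8)*(y^14*(3929-5000*y)^0))) + (5489943441207876134491901997409428888610793739721365120*(y^2*(3929-5000*y)^12) + 250307960702341906230107265293151437182621584957520627200000*(y^3*(3929-5000*y)^11) + 5176561023782617879591926438612033434119956295293718374344431680*(y^4*(3929-5000*y)^10) + 64187832516134940519428219823984333951627381853518446006483664000000*(y^5*(3929-5000*y)^9) + 531259899418312012300415138692871163775675434934939379156512821401707056*(y^6*(3929-5000*y)^8) + 3090145922909906722307395830137068946387544189120848383450123296633018240000*(y^7*(3929-5000*y)^7) + 12941352309704464668326385890392795072940967557760643111910318897549008978727112*(y^8*(3929-5000*y)^6) + 39264183639730450993069431981874750178674316146023460963186604078381649819285360000*(y^9*(3929-5000*y)^5) + 85454593468197955999588230406761675068359117936521021645057091884173463600371008947839*(y^10*(3929-5000*y)^4) + 129525393201952294988029145854355918837070941891879839094184494079470008147066595340780000*(y^11*(3929-5000*y)^3) + 128516386150397830672868482762789412553190009629311065014530448437693116308966105935850000000*(y^12*(3929-5000*y)^2) + 73137236580342056002604247862490234302435010892482903779140307221140827714330882719500000000000*(y^13*(3929-5000*y)^1) + 16782467220999477983144901198071642292276629934561859483108334000004586966570590399375000000000000*(y^14*(3929-5000*y)^0))) by field.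
  rewrite E; clear E. apply Rplus_le_lt_0_compat.
  apply Rplus_le_le_0_compat; [|(apply mm2; [lra|lra|lra|apply vnn; lra])].
  apply Rplus_le_le_0_compat; [|(apply mm2; [lra|lra|lra|apply vnn; lra])].
  apply Rplus_le_le_0_compat; [|(apply mm2; [lra|lra|lra|apply vnn; lra])].
  apply Rplus_le_le_0_compat; [|(apply mm2; [lra|lra|lra|apply vnn; lra])].
  apply Rplus_le_le_0_compat; [|(apply mm2; [lra|lra|lra|apply vnn; lra])].
  apply Rplus_le_le_0_compat; [|(apply mm2; [lra|lra|lra|apply vnn; lra])].
  apply Rplus_le_le_0_compat; [|(apply mm2; [lra|lra|lra|apply vnn; lra])].
  apply Rplus_le_le_0_compat; [|(apply mm2; [lra|lra|lra|apply vnn; lra])].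
  apply Rplus_le_le_0_compat; [|(apply mm2; [lra|lra|lra|apply vnn; lra])].
  apply Rplus_le_le_0_compat; [|(apply mm2; [lra|lra|lra|apply vnn; lra])].
  apply Rplus_le_le_0_compat; [|(apply mm2; [lra|lra|lra|apply vnn; lra])].
  apply Rplus_le_le_0_compat; [|(apply mm2; [lra|lra|lra|apply vnn; lra])].
  apply Rplus_le_le_0_compat; [|(apply mm2; [lra|lra|lra|apply vnn; lra])].
  apply Rplus_le_le_0_compat; [|(apply mm1; [lra|lra|lra|apply vnn; lra])].
  apply Rplus_le_le_0_compat; [|(apply mm1; [lra|lra|lra|apply vnn; lra])].
  apply Rplus_le_le_0_compat; [|(apply mm1; [lra|lra|lra|apply vnn; lra])].
  apply Rplus_le_le_0_compat; [|(apply mm1; [lra|lra|lra|apply vnn; lra])].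
  apply Rplus_le_le_0_compat; [|(apply mm1; [lra|lra|lra|apply vnn; lra])].
  apply Rplus_le_le_0_compat; [|(apply mm1; [lra|lra|lra|apply vnn; lra])].
  apply Rplus_le_le_0_compat; [|(apply mm1; [lra|lra|lra|apply vnn; lra])].
  apply Rplus_le_le_0_compat; [|(apply mm1; [lra|lra|lra|apply vnn; lra])].
  apply Rplus_le_le_0_compat; [|(apply mm1; [lra|lra|lra|apply vnn; lra])].
  apply Rplus_le_le_0_compat; [|(apply mm1; [lra|lra|lra|apply vnn; lra])].
  apply Rplus_le_le_0_compat; [|(apply mm1; [lra|lra|lra|apply vnn; lra])].
  apply Rplus_le_le_0_compat; [|(apply mm1; [lra|lra|lra|apply vnn; lra])].
  apply Rplus_le_le_0_compat; [|(apply mm2; [lra|lra|lra|apply vnn; lra])].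
  apply Rplus_le_le_0_compat; [|(apply mm2; [lra|lra|lra|apply vnn; lra])].
  apply Rplus_le_le_0_compat; [|(apply mm2; [lra|lra|lra|apply vnn; lra])].
  apply Rplus_le_le_0_compat; [|(apply mm2; [lra|lra|lra|apply vnn; lra])].
  apply Rplus_le_le_0_compat; [|(apply mm2; [lra|lra|lra|apply vnn; lra])].
  apply Rplus_le_le_0_compat; [|(apply mm2; [lra|lra|lra|apply vnn; lra])].
  apply Rplus_le_le_0_compat; [|(apply mm2; [lra|lra|lra|apply vnn; lra])].
  apply Rplus_le_le_0_compat; [|(apply mm2; [lra|lra|lra|apply vnn; lra])].
  apply Rplus_le_le_0_compat; [|(apply mm2; [lra|lra|lra|apply vnn; lra])].
  apply Rplus_le_le_0_compat; [|(apply mm2; [lra|lra|lra|apply vnn; lra])].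
  apply Rplus_le_le_0_compat; [|(apply mm2; [lra|lra|lra|apply vnn; lra])].
  apply Rplus_le_le_0_compat; [|(apply mm2; [lra|lra|lra|apply vnn; lra])].
  apply Rplus_le_le_0_compat; [|(apply mm2; [lra|lra|lra|apply vnn; lra])].
  apply Rplus_le_le_0_compat; [|(apply mm1; [lra|lra|lra|apply vnn; lra])].
  apply Rplus_le_le_0_compat; [|(apply mm1; [lra|lra|lra|apply vnn; lra])].
  apply Rplus_le_le_0_compat; [|(apply mm1; [lra|lra|lra|apply vnn; lra])].
  apply Rplus_le_le_0_compat; [|(apply mm1; [lra|lra|lra|apply vnn; lra])].
  apply Rplus_le_le_0_compat; [|(apply mm1; [lra|lra|lra|apply vnn; lra])].
  apply Rplus_le_le_0_compat; [|(apply mm1; [lra|lra|lra|apply vnn; lra])].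
  apply Rplus_le_le_0_compat; [|(apply mm1; [lra|lra|lra|apply vnn; lra])].
  apply Rplus_le_le_0_compat; [|(apply mm1; [lra|lra|lra|apply vnn; lra])].
  apply Rplus_le_le_0_compat; [|(apply mm1; [lra|lra|lra|apply vnn; lra])].
  apply Rplus_le_le_0_compat; [|(apply mm1; [lra|lra|lra|apply vnn; lra])].
  apply Rplus_le_le_0_compat; [|(apply mm1; [lra|lra|lra|apply vnn; lra])].
  apply Rplus_le_le_0_compat; [|(apply mm1; [lra|lra|lra|apply vnn; lra])].
  apply Rplus_le_le_0_compat; [|(apply mm1; [lra|lra|lra|apply vnn; lra])].
  apply Rplus_le_le_0_compat; [|(apply mm1; [lra|lra|lra|apply vnn; lra])].
  apply Rplus_le_le_0_compat; [|(apply mm1; [lra|lra|lra|apply vnn; lra])].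
  apply Rplus_le_le_0_compat; [|(apply mm1; [lra|lra|lra|apply vnn; lra])].
  apply Rplus_le_le_0_compat; [|(apply mm1; [lra|lra|lra|apply vnn; lra])].
  apply Rplus_le_le_0_compat; [|(apply mm1; [lra|lra|lra|apply vnn; lra])].
  apply Rplus_le_le_0_compat; [|(apply mm1; [lra|lra|lra|apply vnn; lra])].
  apply Rplus_le_le_0_compat; [|(apply mm1; [lra|lra|lra|apply vnn; lra])].
  apply Rplus_le_le_0_compat; [|(apply mm1; [lra|lra|lra|apply vnn; lra])].
  apply Rplus_le_le_0_compat; [|(apply mm1; [lra|lra|lra|apply vnn; lra])].
  apply Rplus_le_le_0_compat; [|(apply mm1; [lra|lra|lra|apply vnn; lra])].
  apply Rplus_le_le_0_compat; [|(apply mm1; [lra|lra|lra|apply vnn; lra])].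
  apply Rplus_le_le_0_compat; [|(apply mm1; [lra|lra|lra|apply vnn; lra])].
  apply Rplus_le_le_0_compat; [|(apply mm2; [lra|lra|lra|apply vnn; lra])].
  apply Rplus_le_le_0_compat; [|(apply mm2; [lra|lra|lra|apply vnn; lra])].
  apply Rplus_le_le_0_compat; [|(apply mm2; [lra|lra|lra|apply vnn; lra])].
  apply Rplus_le_le_0_compat; [|(apply mm2; [lra|lra|lra|apply vnn; lra])].
  apply Rplus_le_le_0_compat; [|(apply mm2; [lra|lra|lra|apply vnn; lra])].
  apply Rplus_le_le_0_compat; [|(apply mm2; [lra|lra|lra|apply vnn; lra])].
  apply Rplus_le_le_0_compat; [|(apply mm2; [lra|lra|lra|apply vnn; lra])].
  apply Rplus_le_le_0_compat; [|(apply mm2; [lra|lra|lra|apply vnn; lra])].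
  apply Rplus_le_le_0_compat; [|(apply mm2; [lra|lra|lra|apply vnn; lra])].
  apply Rplus_le_le_0_compat; [|(apply mm2; [lra|lra|lra|apply vnn; lra])].
  apply Rplus_le_le_0_compat; [|(apply mm2; [lra|lra|lra|apply vnn; lra])].
  apply Rplus_le_le_0_compat; [|(apply mm2; [lra|lra|lra|apply vnn; lra])].
  apply Rplus_le_le_0_compat; [|(apply mm1; [lra|lra|lra|apply vnn; lra])].
  apply Rplus_le_le_0_compat; [|(apply mm1; [lra|lra|lra|apply vnn; lra])].
  apply Rplus_le_le_0_compat; [|(apply mm1; [lra|lra|lra|apply vnn; lra])].
  apply Rplus_le_le_0_compat; [|(apply mm1; [lra|lra|lra|apply vnn; lra])].
  apply Rplus_le_le_0_compat; [|(apply mm1; [lra|lra|lra|apply vnn; lra])].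
  apply Rplus_le_le_0_compat; [|(apply mm1; [lra|lra|lra|apply vnn; lra])].
  apply Rplus_le_le_0_compat; [|(apply mm1; [lra|lra|lra|apply vnn; lra])].
  apply Rplus_le_le_0_compat; [|(apply mm1; [lra|lra|lra|apply vnn; lra])].
  apply Rplus_le_le_0_compat; [|(apply mm1; [lra|lra|lra|apply vnn; lra])].
  apply Rplus_le_le_0_compat; [|(apply mm1; [lra|lra|lra|apply vnn; lra])].
  apply Rplus_le_le_0_compat; [|(apply mm1; [lra|lra|lra|apply vnn; lra])].
  apply Rplus_le_le_0_compat; [|(apply mm2; [lra|lra|lra|apply vnn; lra])].
  apply Rplus_le_le_0_compat; [|(apply mm2; [lra|lra|lra|apply vnn; lra])].
  apply Rplus_le_le_0_compat; [|(apply mm2; [lra|lra|lra|apply vnn; lra])].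
  apply Rplus_le_le_0_compat; [|(apply mm2; [lra|lra|lra|apply vnn; lra])].
  apply Rplus_le_le_0_compat; [|(apply mm2; [lra|lra|lra|apply vnn; lra])].
  apply Rplus_le_le_0_compat; [|(apply mm2; [lra|lra|lra|apply vnn; lra])].
  apply Rplus_le_le_0_compat; [|(apply mm2; [lra|lra|lra|apply vnn; lra])].
  apply Rplus_le_le_0_compat; [|(apply mm2; [lra|lra|lra|apply vnn; lra])].
  apply Rplus_le_le_0_compat; [|(apply mm2; [lra|lra|lra|apply vnn; lra])].
  (apply mm2; [lra|lra|lra|apply vnn; lra]).
  apply Rplus_le_lt_0_compat; [|apply Rmult_lt_0_compat; [lra|apply Rmult_lt_0_compat; [apply pow_lt; lra|simpl; lra]]].
  apply Rplus_le_le_0_compat; [|(apply Rmult_le_pos; [lra|apply vnn; lra])].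
  apply Rplus_le_le_0_compat; [|(apply Rmult_le_pos; [lra|apply vnn; lra])].
  apply Rplus_le_le_0_compat; [|(apply Rmult_le_pos; [lra|apply vnn; lra])].
  apply Rplus_le_le_0_compat; [|(apply Rmult_le_pos; [lra|apply vnn; lra])].
  apply Rplus_le_le_0_compat; [|(apply Rmult_le_pos; [lra|apply vnn; lra])].
  apply Rplus_le_le_0_compat; [|(apply Rmult_le_pos; [lra|apply vnn; lra])].
  apply Rplus_le_le_0_compat; [|(apply Rmult_le_pos; [lra|apply vnn; lra])].
  apply Rplus_le_le_0_compat; [|(apply Rmult_le_pos; [lra|apply vnn; lra])].
  apply Rplus_le_le_0_compat; [|(apply Rmult_le_pos; [lra|apply vnn; lra])].
  apply Rplus_le_le_0_compat; [|(apply Rmult_le_pos; [lra|apply vnn; lra])].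
  apply Rplus_le_le_0_compat; [|(apply Rmult_le_pos; [lra|apply vnn; lra])].
  (apply Rmult_le_pos; [lra|apply vnn; lra]).
Qed.

Lemma poly_UB (y p : R) : 0 < y -> y <= (3929/5000) -> (3141592/1000000) <= p -> p <= (3141593/1000000) -> 0 < (p/2-y)*(y - y^3/6 + y^5/120 - y^7/5040)*(p^6 + (72*p^2-8*p^4)*(p/2-y)^2 + (16*p^2-160)*(p/2-y)^4) - p^4*(4*y*(p-y))*(1 - y^2/2 + y^4/24 - y^6/720 + y^8/40320).
Proof.
  intros h0 h1 h2 h3.
  assert (g1 : 3141592 <= 1000000*p) by lra. assert (g2 : 1000000*p <= 3141593) by lra.
  assert (g3 : 0 < y) by lra. assert (g4 : 5000*y <= 3929) by lra. clear h1 h2 h3.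
  apply (pos_of_mul 2249048347022281760632524082505447520000000000000000000000000000000); [lra|].
  assert (E : 2249048347022281760632524082505447520000000000000000000000000000000 * ((p/2-y)*(y - y^3/6 + y^5/120 - y^7/5040)*(p^6 + (72*p^2-8*p^4)*(p/2-y)^2 + (16*p^2-160)*(p/2-y)^4) - p^4*(4*y*(p-y))*(1 - y^2/2 + y^4/24 - y^6/720 + y^8/40320)) = (62242149312000000000000000000000000000*((3141593^1-(1000000*p)^1)*(y^5*(3929-5000*y)^7)) + 2178475225920000000000000000000000000000000*((3141593^1-(1000000*p)^1)*(y^6*(3929-5000*y)^6)) + 32516989286990422368000000000000000000000000000*((3141593^1-(1000000*p)^1)*(y^7*(3929-5000*y)^5)) + 268305925694760559200000000000000000000000000000000*((3141593^1-(1000000*p)^1)*(y^8*(3929-5000*y)^4)) + 1321635844441622473204893345600000000000000000000000000*((3141593^1-(1000000*p)^1)*(y^9*(3929-5000*y)^3)) + 3886321226748281178073400184000000000000000000000000000000*((3141593^1-(1000000*p)^1)*(y^10*(3929-5000*y)^2)) + 6316525234532233846322904063412991200000000000000000000000000*((3141593^1-(1000000*p)^1)*(y^11*(3929-5000*y)^1)) + 4377456531776669330391183917064956000000000000000000000000000000*((3141593^1-(1000000*p)^1)*(y^12*(3929-5000*y)^0)) + 12990216960000000000000000000*(((1000000*p)^2-3141592^2)*(y^4*(3929-5000*y)^8)) + 519608678400000000000000000000000*(((1000000*p)^2-3141592^2)*(y^5*(3929-5000*y)^7)) + 9049948143845723520000000000000000000*(((1000000*p)^2-3141592^2)*(y^6*(3929-5000*y)^6))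 + 89635406875371705600000000000000000000000*(((1000000*p)^2-3141592^2)*(y^7*(3929-5000*y)^5)) + 552171558051158116271806368000000000000000000*(((1000000*p)^2-3141592^2)*(y^8*(3929-5000*y)^4)) + 2166297929794544725436127360000000000000000000000*(((1000000*p)^2-3141592^2)*(y^9*(3929-5000*y)^3)) + 5285800677827225516589167940782000000000000000000000*(((1000000*p)^2-3141592^2)*(y^10*(3929-5000*y)^2)) + 7334008680831194894085311407820000000000000000000000000*(((1000000*p)^2-3141592^2)*(y^11*(3929-5000*y)^1)) + 4430382278602776858292268781531214303008000000000000000000*(((1000000*p)^2-3141592^2)*(y^12*(3929-5000*y)^0)) + 927360000000000000*((3141593^3-(1000000*p)^3)*(y^3*(3929-5000*y)^9)) + 41731200000000000000000*((3141593^3-(1000000*p)^3)*(y^4*(3929-5000*y)^8)) + 826013836011840000000000000*((3141593^3-(1000000*p)^3)*(y^5*(3929-5000*y)^7)) + 9435924260414400000000000000000*((3141593^3-(1000000*p)^3)*(y^6*(3929-5000*y)^6)) + 68527119416067767905968000000000000*((3141593^3-(1000000*p)^3)*(y^7*(3929-5000*y)^5)) + 327924920298094197649200000000000000000*((3141593^3-(1000000*p)^3)*(y^8*(3929-5000*y)^4)) + 1033263502975168291164912439976000000000000*((3141593^3-(1000000*p)^3)*(y^9*(3929-5000*y)^3)) + 2065281816890104602553686599640000000000000000*((3141593^3-(1000000*p)^3)*(y^10*(3929-5000*y)^2)) + 2373338531610158521022842683858700880000000000000*((3141593^3-(1000000*p)^3)*(y^11*(3929-5000*y)^1)) + 1192772466047115112286103425293504400000000000000000*((3141593^3-(1000000*p)^3)*(y^12*(3929-5000*y)^0))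 + 1320144000000000*((3141593^4-(1000000*p)^4)*(y^4*(3929-5000*y)^8)) + 52805760000000000000*((3141593^4-(1000000*p)^4)*(y^5*(3929-5000*y)^7)) + 920758624803159744000000*((3141593^4-(1000000*p)^4)*(y^6*(3929-5000*y)^6)) + 9140742744094792320000000000*((3141593^4-(1000000*p)^4)*(y^7*(3929-5000*y)^5)) + 56505545989204015452815664000000*((3141593^4-(1000000*p)^4)*(y^8*(3929-5000*y)^4)) + 222720995768281589056313280000000000*((3141593^4-(1000000*p)^4)*(y^9*(3929-5000*y)^3)) + 546613421252447755386441514075415000000*((3141593^4-(1000000*p)^4)*(y^10*(3929-5000*y)^2)) + 763695664268385301048751140754150000000000*((3141593^4-(1000000*p)^4)*(y^11*(3929-5000*y)^1)) + 465037330560276594612087851885375000000000000*((3141593^4-(1000000*p)^4)*(y^12*(3929-5000*y)^0)) + 94080*(((1000000*p)^5-3141592^5)*(y^3*(3929-5000*y)^9)) + 4233600000*(((1000000*p)^5-3141592^5)*(y^4*(3929-5000*y)^8)) + 84443778785856*(((1000000*p)^5-3141592^5)*(y^5*(3929-5000*y)^7)) + 979852257504960000*(((1000000*p)^5-3141592^5)*(y^6*(3929-5000*y)^6)) + 7289155440183481690320*(((1000000*p)^5-3141592^5)*(y^7*(3929-5000*y)^5)) + 36049821628347042258000000*(((1000000*p)^5-3141592^5)*(y^8*(3929-5000*y)^4)) + 118530492805287140229390381343*(((1000000*p)^5-3141592^5)*(y^9*(3929-5000*y)^3)) + 249836516769402877640855720145000*(((1000000*p)^5-3141592^5)*(y^10*(3929-5000*y)^2))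 + 306319794412634105954278600725000000*(((1000000*p)^5-3141592^5)*(y^11*(3929-5000*y)^1)) + 166448580475469988423797667875000000000*(((1000000*p)^5-3141592^5)*(y^12*(3929-5000*y)^0))) + (36311742333903575139315310130626560*(y^3*(3929-5000*y)^9) + 1248193746501681092602126758934195200000*(y^4*(3929-5000*y)^8) + 18836785003857547584451946477065672954478592*(y^5*(3929-5000*y)^7) + 163799772427549815102022373104839828250206720000*(y^6*(3929-5000*y)^6) + 904452453146805638569115624361617916460621977354240*(y^7*(3929-5000*y)^5) + 3288392156134100236054656492165983084395880797392000000*(y^8*(3929-5000*y)^4) + 7871019172838222878685522569581750085979779938427671576576*(y^9*(3929-5000*y)^3) + 11955659390695462372752216897958365433201493669618610233640000*(y^10*(3929-5000*y)^2) + 10449174591281062338007958558607239995942136943936574093200000000*(y^11*(3929-5000*y)^1) + 3997746025827990336478050129360648172369337092388561697000000000000*(y^12*(3929-5000*y)^0))) by field.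
  rewrite E; clear E. apply Rplus_le_lt_0_compat.
  apply Rplus_le_le_0_compat; [|(apply mm1; [lra|lra|lra|apply vnn; lra])].
  apply Rplus_le_le_0_compat; [|(apply mm1; [lra|lra|lra|apply vnn; lra])].
  apply Rplus_le_le_0_compat; [|(apply mm1; [lra|lra|lra|apply vnn; lra])].
  apply Rplus_le_le_0_compat; [|(apply mm1; [lra|lra|lra|apply vnn; lra])].
  apply Rplus_le_le_0_compat; [|(apply mm1; [lra|lra|lra|apply vnn; lra])].
  apply Rplus_le_le_0_compat; [|(apply mm1; [lra|lra|lra|apply vnn; lra])].
  apply Rplus_le_le_0_compat; [|(apply mm1; [lra|lra|lra|apply vnn; lra])].
  apply Rplus_le_le_0_compat; [|(apply mm1; [lra|lra|lra|apply vnn; lra])].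
  apply Rplus_le_le_0_compat; [|(apply mm1; [lra|lra|lra|apply vnn; lra])].
  apply Rplus_le_le_0_compat; [|(apply mm1; [lra|lra|lra|apply vnn; lra])].
  apply Rplus_le_le_0_compat; [|(apply mm2; [lra|lra|lra|apply vnn; lra])].
  apply Rplus_le_le_0_compat; [|(apply mm2; [lra|lra|lra|apply vnn; lra])].
  apply Rplus_le_le_0_compat; [|(apply mm2; [lra|lra|lra|apply vnn; lra])].
  apply Rplus_le_le_0_compat; [|(apply mm2; [lra|lra|lra|apply vnn; lra])].
  apply Rplus_le_le_0_compat; [|(apply mm2; [lra|lra|lra|apply vnn; lra])].
  apply Rplus_le_le_0_compat; [|(apply mm2; [lra|lra|lra|apply vnn; lra])].
  apply Rplus_le_le_0_compat; [|(apply mm2; [lra|lra|lra|apply vnn; lra])].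
  apply Rplus_le_le_0_compat; [|(apply mm2; [lra|lra|lra|apply vnn; lra])].
  apply Rplus_le_le_0_compat; [|(apply mm2; [lra|lra|lra|apply vnn; lra])].
  apply Rplus_le_le_0_compat; [|(apply mm2; [lra|lra|lra|apply vnn; lra])].
  apply Rplus_le_le_0_compat; [|(apply mm2; [lra|lra|lra|apply vnn; lra])].
  apply Rplus_le_le_0_compat; [|(apply mm2; [lra|lra|lra|apply vnn; lra])].
  apply Rplus_le_le_0_compat; [|(apply mm2; [lra|lra|lra|apply vnn; lra])].
  apply Rplus_le_le_0_compat; [|(apply mm2; [lra|lra|lra|apply vnn; lra])].
  apply Rplus_le_le_0_compat; [|(apply mm2; [lra|lra|lra|apply vnn; lra])].
  apply Rplus_le_le_0_compat; [|(apply mm2; [lra|lra|lra|apply vnn; lra])].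
  apply Rplus_le_le_0_compat; [|(apply mm2; [lra|lra|lra|apply vnn; lra])].
  apply Rplus_le_le_0_compat; [|(apply mm2; [lra|lra|lra|apply vnn; lra])].
  apply Rplus_le_le_0_compat; [|(apply mm2; [lra|lra|lra|apply vnn; lra])].
  apply Rplus_le_le_0_compat; [|(apply mm1; [lra|lra|lra|apply vnn; lra])].
  apply Rplus_le_le_0_compat; [|(apply mm1; [lra|lra|lra|apply vnn; lra])].
  apply Rplus_le_le_0_compat; [|(apply mm1; [lra|lra|lra|apply vnn; lra])].
  apply Rplus_le_le_0_compat; [|(apply mm1; [lra|lra|lra|apply vnn; lra])].
  apply Rplus_le_le_0_compat; [|(apply mm1; [lra|lra|lra|apply vnn; lra])].
  apply Rplus_le_le_0_compat; [|(apply mm1; [lra|lra|lra|apply vnn; lra])].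
  apply Rplus_le_le_0_compat; [|(apply mm1; [lra|lra|lra|apply vnn; lra])].
  apply Rplus_le_le_0_compat; [|(apply mm1; [lra|lra|lra|apply vnn; lra])].
  apply Rplus_le_le_0_compat; [|(apply mm1; [lra|lra|lra|apply vnn; lra])].
  apply Rplus_le_le_0_compat; [|(apply mm2; [lra|lra|lra|apply vnn; lra])].
  apply Rplus_le_le_0_compat; [|(apply mm2; [lra|lra|lra|apply vnn; lra])].
  apply Rplus_le_le_0_compat; [|(apply mm2; [lra|lra|lra|apply vnn; lra])].
  apply Rplus_le_le_0_compat; [|(apply mm2; [lra|lra|lra|apply vnn; lra])].
  apply Rplus_le_le_0_compat; [|(apply mm2; [lra|lra|lra|apply vnn; lra])].
  apply Rplus_le_le_0_compat; [|(apply mm2; [lra|lra|lra|apply vnn; lra])].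
  apply Rplus_le_le_0_compat; [|(apply mm2; [lra|lra|lra|apply vnn; lra])].
  (apply mm2; [lra|lra|lra|apply vnn; lra]).
  apply Rplus_le_lt_0_compat; [|apply Rmult_lt_0_compat; [lra|apply Rmult_lt_0_compat; [apply pow_lt; lra|simpl; lra]]].
  apply Rplus_le_le_0_compat; [|(apply Rmult_le_pos; [lra|apply vnn; lra])].
  apply Rplus_le_le_0_compat; [|(apply Rmult_le_pos; [lra|apply vnn; lra])].
  apply Rplus_le_le_0_compat; [|(apply Rmult_le_pos; [lra|apply vnn; lra])].
  apply Rplus_le_le_0_compat; [|(apply Rmult_le_pos; [lra|apply vnn; lra])].
  apply Rplus_le_le_0_compat; [|(apply Rmult_le_pos; [lra|apply vnn; lra])].
  apply Rplus_le_le_0_compat; [|(apply Rmult_le_pos; [lra|apply vnn; lra])].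
  apply Rplus_le_le_0_compat; [|(apply Rmult_le_pos; [lra|apply vnn; lra])].
  apply Rplus_le_le_0_compat; [|(apply Rmult_le_pos; [lra|apply vnn; lra])].
  (apply Rmult_le_pos; [lra|apply vnn; lra]).
Qed.

Definition S7 (a:R) := a - a^3/6 + a^5/120 - a^7/5040.
Definition S9 (a:R) := a - a^3/6 + a^5/120 - a^7/5040 + a^9/362880.
Definition C6 (a:R) := 1 - a^2/2 + a^4/24 - a^6/720.
Definition C8 (a:R) := 1 - a^2/2 + a^4/24 - a^6/720 + a^8/40320.

Lemma key_L x : 0 < x -> x < PI/2 -> 0 < 3*PI^4*(PI^2-4*x^2)*sin x - x*cos x*QL PI x.
Proof.
  intros hx0 hx1. pose proof pi_bounds as [hp1 hp2].
  assert (hq : 0 < QL PI x) by (apply QL_pos; lra).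
  destruct (Rle_lt_dec x (157/200)) as [hA|hB].
  - pose proof (poly_LA x PI hx0 hA ltac:(lra) ltac:(lra)) as P.
    destruct (sin_bnd x) as [s1 s2]; try lra.
    destruct (cos_bnd x) as [c1 c2]; try lra.
    assert (hD : 0 <= 3*PI^4*(PI^2-4*x^2)).
    { apply Rmult_le_pos; [apply Rmult_le_pos; [lra|apply pow_le; lra]|nra]. }
    assert (h1 : 3*PI^4*(PI^2-4*x^2)*S7 x <= 3*PI^4*(PI^2-4*x^2)*sin x)
      by (apply Rmult_le_compat_l; unfold S7; lra).
    assert (h2 : x*cos x*QL PI x <= x*C8 x*QL PI x).
    { apply Rmult_le_compat_r; [lra|]. apply Rmult_le_compat_l; unfold C8; lra. }
    unfold S7, C8, QL in *. lra.
  - remember (PI/2 - x) as y eqn:Hy.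
    assert (Hx : x = PI/2 - y) by lra. subst x.
    rewrite sin_shift, cos_shift.
    assert (hy0 : 0 < y) by lra.
    assert (hy1 : y <= 3929/5000) by lra.
    pose proof (poly_LB y PI hy0 hy1 ltac:(lra) ltac:(lra)) as P.
    destruct (sin_bnd y) as [s1 s2]; try lra.
    destruct (cos_bnd y) as [c1 c2]; try lra.
    assert (hD : 0 <= 3*PI^4*(PI^2-4*(PI/2-y)^2)).
    { apply Rmult_le_pos; [apply Rmult_le_pos; [lra|apply pow_le; lra]|nra]. }
    assert (h1 : 3*PI^4*(PI^2-4*(PI/2-y)^2)*C6 y <= 3*PI^4*(PI^2-4*(PI/2-y)^2)*cos y)
      by (apply Rmult_le_compat_l; unfold C6; lra).
    assert (h2 : (PI/2-y)*sin y*QL PI (PI/2-y) <= (PI/2-y)*S9 y*QL PI (PI/2-y)).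
    { apply Rmult_le_compat_r; [lra|]. apply Rmult_le_compat_l; unfold S9; lra. }
    unfold C6, S9, QL in *. lra.
Qed.

Lemma key_U x : 0 < x -> x < PI/2 -> 0 < x*cos x*QU PI x - PI^4*(PI^2-4*x^2)*sin x.
Proof.
  intros hx0 hx1. pose proof pi_bounds as [hp1 hp2].
  assert (hq : 0 < QU PI x) by (apply QU_pos; lra).
  destruct (Rle_lt_dec x (157/200)) as [hA|hB].
  - pose proof (poly_UA x PI hx0 hA ltac:(lra) ltac:(lra)) as P.
    destruct (sin_bnd x) as [s1 s2]; try lra.
    destruct (cos_bnd x) as [c1 c2]; try lra.
    assert (hD : 0 <= PI^4*(PI^2-4*x^2)).
    { apply Rmult_le_pos; [apply pow_le; lra|nra]. }
    assert (h1 : PI^4*(PI^2-4*x^2)*sin x <= PI^4*(PI^2-4*x^2)*S9 x)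
      by (apply Rmult_le_compat_l; unfold S9; lra).
    assert (h2 : x*C6 x*QU PI x <= x*cos x*QU PI x).
    { apply Rmult_le_compat_r; [lra|]. apply Rmult_le_compat_l; unfold C6; lra. }
    unfold S9, C6, QU in *. lra.
  - remember (PI/2 - x) as y eqn:Hy.
    assert (Hx : x = PI/2 - y) by lra. subst x.
    rewrite sin_shift, cos_shift.
    assert (hy0 : 0 < y) by lra.
    assert (hy1 : y <= 3929/5000) by lra.
    pose proof (poly_UB y PI hy0 hy1 ltac:(lra) ltac:(lra)) as P.
    destruct (sin_bnd y) as [s1 s2]; try lra.
    destruct (cos_bnd y) as [c1 c2]; try lra.
    assert (hD : 0 <= PI^4*(PI^2-4*(PI/2-y)^2)).
    { apply Rmult_le_pos; [apply pow_le; lra|nra]. }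
    assert (h1 : PI^4*(PI^2-4*(PI/2-y)^2)*cos y <= PI^4*(PI^2-4*(PI/2-y)^2)*C8 y)
      by (apply Rmult_le_compat_l; unfold C8; lra).
    assert (h2 : (PI/2-y)*S7 y*QU PI (PI/2-y) <= (PI/2-y)*sin y*QU PI (PI/2-y)).
    { apply Rmult_le_compat_r; [lra|]. apply Rmult_le_compat_l; unfold S7; lra. }
    unfold S7, C8, QU in *. lra.
Qed.

Theorem mainTheorem15 (x : R) (hx0 : 0 < x) (hx1 : x < PI / 2) :
  (PI ^ 2 + (PI ^ 2 - 12) / 3 * x ^ 2
     + (384 - 4 * PI ^ 4) / (3 * PI ^ 4) * x ^ 4) / (PI ^ 2 - 4 * x ^ 2)
    < tan x / x /\
  tan x / x <
  (PI ^ 2 + (72 - 8 * PI ^ 2) / PI ^ 2 * x ^ 2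
     + (16 * PI ^ 2 - 160) / PI ^ 4 * x ^ 4) / (PI ^ 2 - 4 * x ^ 2).
Proof.
  pose proof pi_bounds as [hp1 hp2].
  assert (hc : 0 < cos x) by (apply cos_gt_0; lra).
  assert (hD : 0 < PI^2 - 4*x^2) by nra.
  assert (hP : 0 < PI) by lra.
  pose proof (key_L x hx0 hx1) as KL.
  pose proof (key_U x hx0 hx1) as KU.
  unfold QL, QU in KL, KU.
  assert (n1 : x <> 0) by lra. assert (n2 : cos x <> 0) by lra.
  assert (n3 : PI^2 - 4*x^2 <> 0) by lra. assert (n4 : PI <> 0) by lra.
  split; apply Rlt_0_minus.
  - apply (pos_of_mul (3*PI^4*(PI^2-4*x^2)*cos x*x)).
    + assert (h4 : 0 < PI^4) by (apply pow_lt; lra).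
      apply Rmult_lt_0_compat; [|lra]. apply Rmult_lt_0_compat; [|lra]. apply Rmult_lt_0_compat; lra.
    + match goal with |- 0 < ?E => replace E with (3*PI^4*(PI^2-4*x^2)*sin x - x*cos x*(3*PI^6 + (PI^6-12*PI^4)*x^2 + (384-4*PI^4)*x^4)) end; [exact KL|].
      unfold tan. field. repeat split; auto.
  - apply (pos_of_mul (PI^4*(PI^2-4*x^2)*cos x*x)).
    + assert (h4 : 0 < PI^4) by (apply pow_lt; lra).
      apply Rmult_lt_0_compat; [|lra]. apply Rmult_lt_0_compat; [|lra]. apply Rmult_lt_0_compat; lra.
    + match goal with |- 0 < ?E => replace E with (x*cos x*(PI^6 + (72*PI^2-8*PI^4)*x^2 + (16*PI^2-160)*x^4) - PI^4*(PI^2-4*x^2)*sin x) end; [exact KU|].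
      unfold tan. field. repeat split; auto.
Qed.
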